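(* Let $\tau$ be a trace on $\widehat{TL}_3(q)$, let $X=g_{\sigma_2}g_{\sigma_1}g_{a_3}$, $u=g_{\sigma_2}g_{a_3}g_{\sigma_2}^{-1}$, and let $r\le s$ be positive integers. Then there exist an integer $0\le h\le s$, elements $c_0,\dots,c_h\in B$ and finitely many Markov elements $M_i$ such that $$\tau\Big((g_{\sigma_1}u)^{r}g_{\sigma_1}g_{\sigma_2}(g_{\sigma_1}u)^{s}g_{\sigma_1}g_{\sigma_2}\Big)=\tau\Big(\sum_{j=0}^{h}c_jX^{j}+\sum_iM_i\Big).$$
   Context: $K$ is an integral domain of characteristic $0$, $q\in K$ invertible and a square, $q+1$ invertible. $\widehat{TL}_3(q)$ is the unital $K$-algebra generated by $g_{\sigma_1},g_{\sigma_2},g_{a_3}$ with relations $g_{\sigma_1}g_{\sigma_2}g_{\sigma_1}=g_{\sigma_2}g_{\sigma_1}g_{\sigma_2}$, $g_{\sigma_i}g_{a_3}g_{\sigma_i}=g_{a_3}g_{\sigma_i}g_{a_3}$ ($i=1,2$), $x^2=(q-1)x+q$ for each generator $x$, and $V(g_{\sigma_1},g_{\sigma_2})=V(g_{\sigma_1},g_{a_3})=V(g_{\sigma_2},g_{a_3})=0$ where $V(x,y)=xyx+xy+yx+x+y+1$. $B$ is the unital subalgebra generated by $g_{\sigma_1}$ and $u$. A Markov element is an element $A\,g_{\sigma_2}^{\epsilon}A'$ with $A,A'\in B$, $\epsilon\in\{0,1\}$. A trace is a $K$-linear map $\tau:\widehat{TL}_3(q)\to K$ with $\tau(xy)=\tau(yx)$.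 *)

(* Defs.v *)
From HB Require Import structures.
From mathcomp Require Import all_boot all_order all_algebra.
Set Implicit Arguments. Unset Strict Implicit. Unset Printing Implicit Defensive.
Import Order.TTheory GRing.Theory Num.Theory.
Local Open Scope ring_scope.

Definition Vrel (R : ringType) (x y : R) : R :=
  x * y * x + x * y + y * x + x + y + 1.

(* The defining relations of \widehat{TL}_3(q), for elements g1 = g_{sigma_1},
   g2 = g_{sigma_2}, g3 = g_{a_3} of a K-algebra A. *)
Definition TL3hat_rels (K : comRingType) (A : algType K) (q : K)
    (g1 g2 g3 : A) : Prop :=
  [/\ g1 * g2 * g1 = g2 * g1 * g2,
      g1 * g3 * g1 = g3 * g1 * g3,
      g2 * g3 * g2 = g3 * g2 * g3,
      [/\ g1 ^+ 2 = (q - 1) *: g1 + q%:A,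
          g2 ^+ 2 = (q - 1) *: g2 + q%:A &
          g3 ^+ 2 = (q - 1) *: g3 + q%:A] &
      [/\ Vrel g1 g2 = 0, Vrel g1 g3 = 0 & Vrel g2 g3 = 0]].

Inductive in_subalg2 (K : comRingType) (A : algType K) (a b : A) : A -> Prop :=
  | sub2_1 : in_subalg2 a b 1
  | sub2_a : in_subalg2 a b a
  | sub2_b : in_subalg2 a b b
  | sub2_add x y : in_subalg2 a b x -> in_subalg2 a b y -> in_subalg2 a b (x + y)
  | sub2_scale (k : K) x : in_subalg2 a b x -> in_subalg2 a b (k *: x)
  | sub2_mul x y : in_subalg2 a b x -> in_subalg2 a b y -> in_subalg2 a b (x * y).

Definition markov_elt (K : comRingType) (A : algType K) (g1 u g2 : A) (m : A) : Prop :=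
  exists (a a' : A) (eps : bool),
    [/\ in_subalg2 g1 u a, in_subalg2 g1 u a' & m = a * g2 ^+ eps * a'].

Definition is_trace (K : comRingType) (A : algType K) (tau : A -> K) : Prop :=
  (forall (k : K) (x y : A), tau (k *: x + y) = k * tau x + tau y) /\
  (forall x y : A, tau (x * y) = tau (y * x)).

(* Main.v *)
Require Import Defs.
From HB Require Import structures.
From mathcomp Require Import all_boot all_order all_algebra ring zify.
Set Implicit Arguments. Unset Strict Implicit. Unset Printing Implicit Defensive.
Import Order.TTheory GRing.Theory Num.Theory.
Local Open Scope ring_scope.
Section Gen.
Variables (K : idomainType) (A : algType K) (q : K).
Hypothesis hq1 : q + 1 \is a GRing.unit.
Let c := (q + 1)^-1.

Lemma sq_gen (x : A) : x ^+ 2 = (q - 1) *: x + q%:A ->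
  (x + 1) * (x + 1) = (q + 1) *: (x + 1).
Proof.
move=> hx.
rewrite mulrDl mulrDr !mul1r mulr1 -expr2 hx.
rewrite !addrA (ACl ((1*3*4)*(2*5))) scalerDr; congr (_ + _).
  have e : q + 1 = (q - 1) + 1 + 1 by ring.
  by rewrite e !scalerDl scale1r.
by rewrite scalerDl scale1r.
Qed.

Lemma idem_gen (x : A) : x ^+ 2 = (q - 1) *: x + q%:A ->
  (c *: (x + 1)) * (c *: (x + 1)) = c *: (x + 1).
Proof.
move=> hx.
rewrite -scalerAl -scalerAr (sq_gen hx) !scalerA.
by rewrite -mulrA mulVr // mulr1.
Qed.

Lemma Vform (x y : A) : Vrel x y = (x + 1) * y * (x + 1) + (x + 1).
Proof.
rewrite /Vrel !mulrDl !mulrDr !mul1r !mulr1.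
by rewrite !addrA [RHS](ACl (1*2*3*5*4*6)).
Qed.

Lemma tl_gen (x y : A) : x ^+ 2 = (q - 1) *: x + q%:A -> Vrel x y = 0 ->
  (c *: (x + 1)) * (c *: (y + 1)) * (c *: (x + 1)) = (q * c * c) *: (c *: (x + 1)).
Proof.
move=> hx hV.
have h1 : (x + 1) * y * (x + 1) = - (x + 1).
  by apply/eqP; rewrite -addr_eq0 -Vform hV.
have h2 : (x + 1) * (y + 1) * (x + 1) = q *: (x + 1).
  rewrite [(x + 1) * (y + 1)]mulrDr mulr1 mulrDl h1 (sq_gen hx) scalerDl scale1r.
  by rewrite addrC addrK.
rewrite -!scalerAl -!scalerAr -scalerAl h2 !scalerA; congr (_ *: _).
by ring.
Qed.
End Gen.

Lemma Vsym (K : idomainType) (A : algType K) (x y : A) :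
  x * y * x = y * x * y -> Vrel y x = Vrel x y.
Proof.
move=> h; rewrite /Vrel h.
by rewrite [RHS](ACl (1*3*2*5*4*6)).
Qed.

Section Words.
Variables (K : idomainType) (A : algType K) (E0 E1 E2 : A) (kap : K).
Hypothesis Eid : [/\ E0 * E0 = E0, E1 * E1 = E1 & E2 * E2 = E2].
Hypothesis Etl1 : [/\ E0 * E1 * E0 = kap *: E0, E0 * E2 * E0 = kap *: E0 &
   E1 * E0 * E1 = kap *: E1].
Hypothesis Etl2 : [/\ E1 * E2 * E1 = kap *: E1,
   E2 * E0 * E2 = kap *: E2 & E2 * E1 * E2 = kap *: E2].

Definition e (n : nat) : A := nth 0 [:: E0; E1; E2] ((n) %% 3)%N.
Definition step (b : bool) : nat := if b then 1%N else 2%N.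
Fixpoint W (i : nat) (b : bool) (m : nat) : A :=
  if m is m'.+1 then e i * W (i + step b) b m' else 1.

Lemma e_mod i : e ((i) %% 3)%N = e i.
Proof. by rewrite /e modn_mod. Qed.

Lemma e_eq i j : (i %% 3)%N = (j %% 3)%N -> e i = e j.
Proof. by move=> h; rewrite -e_mod h e_mod. Qed.

Lemma W_mod m i b : W ((i) %% 3)%N b m = W i b m.
Proof.
elim: m i => [//|m IH] i /=.
rewrite e_mod; congr (_ * _).
by rewrite -(IH (i %% 3 + step b)%N) -(IH (i + step b)%N) modnDml.
Qed.

Lemma W_eq i j b m : (i %% 3)%N = (j %% 3)%N -> W i b m = W j b m.
Proof. by move=> h; rewrite -W_mod h W_mod. Qed.

Lemma res3 i : (i %% 3)%N = 0%N \/ (i %% 3)%N = 1%N \/ (i %% 3)%N = 2%N.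
Proof. have := ltn_pmod i (isT : (0 < 3)%N). lia. Qed.

Lemma e_idem n : e n * e n = e n.
Proof.
case: Eid => h0 h1 h2.
by rewrite -e_mod; case: (res3 n) => [->|[->|->]]; rewrite /e.
Qed.

Lemma e_tl n m : (n %% 3)%N != (m %% 3)%N -> e n * e m * e n = kap *: e n.
Proof.
case: Etl1 => h01 h02 h10; case: Etl2 => h12 h20 h21.
rewrite -(e_mod n) -(e_mod m).
by case: (res3 n) => [->|[->|->]]; case: (res3 m) => [->|[->|->]]; rewrite /e.
Qed.

Inductive Fs (n : nat) : A -> Prop :=
| FsW i b m : (m <= n)%N -> Fs n (W i b m)
| Fs0 : Fs n 0
| FsD x y : Fs n x -> Fs n y -> Fs n (x + y)
| FsZ (k : K) x : Fs n x -> Fs n (k *: x).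

Lemma Fs_mono n n' x : (n <= n')%N -> Fs n x -> Fs n' x.
Proof.
move=> hn; elim=> [i b m hm| |y z _ hy _ hz|k y _ hy].
- by apply: FsW; apply: leq_trans hn.
- exact: Fs0.
- exact: FsD.
- exact: FsZ.
Qed.

Lemma FsN n x : Fs n x -> Fs n (- x).
Proof. by move=> h; rewrite -scaleN1r; apply: FsZ. Qed.

Lemma FsB n x y : Fs n x -> Fs n y -> Fs n (x - y).
Proof. by move=> hx hy; apply: FsD => //; apply: FsN. Qed.

Lemma Fs1 n : Fs n 1.
Proof. exact: (@FsW n 0 true 0). Qed.

Lemma Fse n i : Fs n.+1 (e i).
Proof. have := @FsW n.+1 i true 1 isT. by rewrite /= mulr1. Qed.

Lemma step_tri i j b :
  [|| (j %% 3 == i %% 3)%N, ((j + step b) %% 3 == i %% 3)%N |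
      ((j %% 3 == (i + step b) %% 3)%N && (j %% 3 != i %% 3)%N)].
Proof.
rewrite -(modnDml j) -(modnDml i).
by case: (res3 i) => [->|[->|->]]; case: (res3 j) => [->|[->|->]]; case: b.
Qed.

Lemma eW j i b m : Fs m.+1 (e j * W i b m).
Proof.
case: m => [|m'].
  have -> : e j * W i b 0 = W j b 1 by [].
  exact: FsW.
have -> : W i b m'.+1 = e i * W (i + step b) b m' by [].
case/or3P: (step_tri i j b) => [/eqP h|/eqP h|/andP[/eqP h hne]].
- rewrite (e_eq h) mulrA e_idem.
  have -> : e i * W (i + step b) b m' = W i b m'.+1 by [].
  by apply: FsW.
- have -> : e j * (e i * W (i + step b) b m') = W j b m'.+2.
    have -> : W j b m'.+2 = e j * W (j + step b) b m'.+1 by [].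
    by rewrite (W_eq b m'.+1 h).
  exact: FsW.
- case: m' => [|m''].
  + have -> : e j * (e i * W (i + step b) b 0) = W j (~~ b) 2.
      rewrite /=; congr (_ * (_ * _)); apply: e_eq.
      have hs : (step b + step (~~ b) = 3)%N by case: (b).
      first [ by rewrite -modnDml h modnDml -addnA hs modnDr
            | by symmetry; rewrite -modnDml h modnDml -addnA hs modnDr ].
    exact: FsW.
  + have -> : W (i + step b) b m''.+1 = e (i + step b) * W (i + step b + step b) b m'' by [].
    rewrite -(e_eq h) !mulrA e_tl // -scalerAl.
    have -> : W (i + step b + step b) b m'' = W (j + step b) b m''.
      by apply: W_eq; rewrite -modnDml -h modnDml.
    have -> : e j * W (j + step b) b m'' = W j b m''.+1 by [].
    by apply: FsZ; apply: FsW; lia.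
Qed.

Lemma Fs_el j n x : Fs n x -> Fs n.+1 (e j * x).
Proof.
elim=> [i b m hm| |y z _ hy _ hz|k y _ hy].
- by apply: (Fs_mono _ (eW j i b m)).
- by rewrite mulr0; exact: Fs0.
- by rewrite mulrDr; exact: FsD.
- by rewrite -scalerAr; exact: FsZ.
Qed.

Lemma Fs_Wl i b k m y : Fs m y -> Fs (k + m) (W i b k * y).
Proof.
move=> hy; elim: k i => [|k IH] i /=; first by rewrite mul1r.
by rewrite -mulrA; apply: Fs_el.
Qed.

Lemma FsM n m x y : Fs n x -> Fs m y -> Fs (n + m) (x * y).
Proof.
move=> hx hy; elim: hx => [i b k hk| |x1 x2 _ h1 _ h2|k x1 _ h1].
- by apply: (Fs_mono _ (Fs_Wl i b k hy)); rewrite leq_add2r.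
- by rewrite mul0r; exact: Fs0.
- by rewrite mulrDl; exact: FsD.
- by rewrite -scalerAl; exact: FsZ.
Qed.

Lemma Fs_exp a n x : Fs a x -> Fs (a * n) (x ^+ n).
Proof.
move=> hx; elim: n => [|n IH]; first by rewrite muln0 expr0; apply: Fs1.
by rewrite exprS mulnS; apply: FsM.
Qed.

Lemma Wsnoc i b n : W i b n.+1 = W i b n * e (i + n * step b).
Proof.
elim: n i => [|n IH] i /=; first by rewrite mul1r mulr1 addn0.
rewrite -mulrA; congr (_ * _).
change (W (i + step b) b n.+1 = W (i + step b) b n * e (i + n.+1 * step b)).
by rewrite IH mulSn addnA.
Qed.

Lemma Wcat i b n m : W i b (n + m) = W i b n * W (i + n * step b) b m.
Proof.
elim: n i => [|n IH] i /=; first by rewrite mul1r addn0.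
by rewrite IH mulrA mulSn addnA.
Qed.

Lemma e_add3 i k : e (i + 3 * k) = e i.
Proof. by apply: e_eq; rewrite addnC mulnC modnMDl. Qed.

Lemma step_ne i b : (i %% 3 != (i + step b) %% 3)%N.
Proof.
rewrite -(modnDml i).
by case: (res3 i) => [->|[->|->]]; case: b.
Qed.

Lemma W_pow b k : W 0 b (3 * k) = W 0 b 3 ^+ k.
Proof.
elim: k => [|k IH]; first by rewrite muln0 expr0.
rewrite mulnS Wcat exprS; congr (_ * _).
rewrite -IH; apply: W_eq.
by case: (b).
Qed.

Variable tau : A -> K.
Hypothesis tauC : forall x y, tau (x * y) = tau (y * x).

Lemma T3 i b k : tau (W i b (3 * k.+1)) = tau (W (i + step b) b (3 * k.+1)).
Proof.
have -> : (3 * k.+1 = (3 * k).+2.+1)%N by lia.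
rewrite [W i b _]/= [W (i + step b) b _]Wsnoc tauC; congr (tau (_ * _)).
apply: e_eq.
have -> : (i + step b + (3 * k).+2 * step b = i + 3 * (k.+1 * step b))%N.
  by case: (b) => /=; lia.
by rewrite addnC mulnC modnMDl.
Qed.

Hypothesis tauZ : forall k x, tau (k *: x) = k * tau x.

Lemma T1 i b k : tau (W i b (3 * k.+1).+1) = tau (W i b (3 * k.+1)).
Proof.
rewrite Wsnoc.
have -> : e (i + 3 * k.+1 * step b) = e i.
  by apply: e_eq; rewrite -mulnA addnC mulnC modnMDl.
rewrite tauC; have -> : (3 * k.+1 = (3 * k).+2.+1)%N by lia.
by rewrite [W i b _]/= mulrA e_idem.
Qed.

Lemma T2 i b k : tau (W i b (3 * k.+1).+2) = kap * tau (W (i + step b) b (3 * k.+1)).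
Proof.
have -> : (3 * k.+1 = (3 * k).+2.+1)%N by lia.
rewrite -[W i b _]/(e i * (e (i + step b) * W (i + step b + step b) b (3 * k).+3)).
rewrite [W (i + step b + step b) b _]Wsnoc.
have -> : e (i + step b + step b + (3 * k).+2 * step b) = e (i + step b).
  apply: e_eq.
  have -> : (i + step b + step b + (3 * k).+2 * step b = (i + step b) + 3 * (k.+1 * step b))%N.
    by case: (b) => /=; lia.
  by rewrite [(_ + 3 * _)%N]addnC mulnC modnMDl.
rewrite !mulrA tauC !mulrA e_tl; last by rewrite eq_sym step_ne.
by rewrite -!scalerAl tauZ -!mulrA.
Qed.

Lemma T2b i b : tau (W i b 2) = kap * tau (W i b 1).
Proof.
rewrite /= !mulr1.
have -> : e i * e (i + step b) = e i * (e i * e (i + step b)) by rewrite mulrA e_idem.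
rewrite tauC e_tl; last by rewrite step_ne.
by rewrite tauZ.
Qed.

Lemma Trot i b k : tau (W i b (3 * k.+1)) = tau (W 0 b (3 * k.+1)).
Proof.
rewrite -W_mod; case: (res3 i) => [->|[->|->]] //; case: b.
- by rewrite (T3 0 true k).
- rewrite (T3 1 false k); congr (tau _); exact: W_eq.
- rewrite (T3 2 true k); congr (tau _); exact: W_eq.
- by rewrite (T3 0 false k).
Qed.

End Words.


Section Main.
Variables (K : idomainType) (q : K).
Hypotheses (hq : q \is a GRing.unit) (hq1 : q + 1 \is a GRing.unit).
Variables (A : algType K) (g1 g2 g3 g2inv : A).
Hypothesis hrel : TL3hat_rels q g1 g2 g3.
Hypothesis hinv : g2 * g2inv = 1 /\ g2inv * g2 = 1.

Definition cc := (q + 1)^-1.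
Definition kp := q * cc * cc.
Definition F0 : A := locked (cc *: (g1 + 1)).
Definition F1 : A := locked (cc *: (g2 + 1)).
Definition F2 : A := locked (cc *: (g3 + 1)).
Lemma F0E : F0 = cc *: (g1 + 1). Proof. by rewrite /F0 -lock. Qed.
Lemma F1E : F1 = cc *: (g2 + 1). Proof. by rewrite /F1 -lock. Qed.
Lemma F2E : F2 = cc *: (g3 + 1). Proof. by rewrite /F2 -lock. Qed.

Lemma Fid : [/\ F0 * F0 = F0, F1 * F1 = F1 & F2 * F2 = F2].
Proof.
case: hrel => _ _ _ [s1 s2 s3] _.
by rewrite F0E F1E F2E; split; apply: idem_gen.
Qed.

Lemma Ftl1 : [/\ F0 * F1 * F0 = kp *: F0, F0 * F2 * F0 = kp *: F0 &
   F1 * F0 * F1 = kp *: F1].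
Proof.
case: hrel => b12 b13 b23 [s1 s2 s3] [v12 v13 v23].
rewrite F0E F1E F2E /kp /cc; split; apply: tl_gen => //.
by rewrite Vsym.
Qed.

Lemma Ftl2 : [/\ F1 * F2 * F1 = kp *: F1,
   F2 * F0 * F2 = kp *: F2 & F2 * F1 * F2 = kp *: F2].
Proof.
case: hrel => b12 b13 b23 [s1 s2 s3] [v12 v13 v23].
rewrite F0E F1E F2E /kp /cc; split; apply: tl_gen => //; by rewrite Vsym.
Qed.

Lemma ccK : (q + 1) * cc = 1.
Proof. by rewrite /cc mulrV. Qed.

Lemma gF (g : A) : g = (q + 1) *: (cc *: (g + 1)) - 1.
Proof. by rewrite scalerA ccK scale1r addrK. Qed.

Definition dd := (q + 1) * q^-1.
Definition al := - (q + 1).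
Definition be := - dd.
Definition ga := be + 1.
Definition F' := g2 * F2 * g2inv.
Definition UU := F0 * F1 * F2.
Definition DD := F0 * F2 * F1.

Lemma ginvF : g2inv = dd *: F1 - 1.
Proof.
have h : g2 * (dd *: F1 - 1) = 1.
  have e2 := gF g2; rewrite -F1E in e2; rewrite {1}e2.
  rewrite mulrBr mulr1 mulrBl mul1r -scalerAl -scalerAr scalerA.
  case: Fid => _ -> _.
  have -> : (q + 1) * dd *: F1 - dd *: F1 - ((q + 1) *: F1 - 1)
     = ((q + 1) * dd - dd - (q + 1)) *: F1 + 1.
    by rewrite !scalerBl opprB !addrA (ACl (1*2*4*3)).
  have -> : (q + 1) * dd - dd - (q + 1) = 0.
    rewrite /dd.
    have -> : (q + 1) * ((q + 1) * q^-1) - (q + 1) * q^-1 - (q + 1)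
        = (q + 1) * (q^-1 * q - 1) by ring.
    by rewrite mulVr // subrr mulr0.
  by rewrite scale0r add0r.
case: hinv => _ h2.
by rewrite -[LHS]mulr1 -{1}h mulrA h2 mul1r.
Qed.

Lemma F'B : F' = cc *: (g2 * g3 * g2inv + 1).
Proof.
rewrite /F' F2E -scalerAr -scalerAl mulrDr mulr1 mulrDl.
by case: hinv => -> _.
Qed.

Lemma F'exp : F' = F1 + al *: (F1 * F2) + be *: (F2 * F1) + F2.
Proof.
have e2 := gF g2; rewrite -F1E in e2.
rewrite /F' ginvF {1}e2.
have -> : ((q + 1) *: F1 - 1) * F2 = (q + 1) *: (F1 * F2) - F2.
  by rewrite mulrBl mul1r -scalerAl.
rewrite mulrBr mulr1 mulrBl -scalerAl -!scalerAr scalerA.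
case: Ftl2 => -> _ _.
rewrite scalerA.
have -> : (q + 1) * dd * kp = 1.
  rewrite /dd /kp /cc.
  have -> : (q + 1) * ((q + 1) * q^-1) * (q * (q + 1)^-1 * (q + 1)^-1)
     = ((q + 1) * (q + 1)^-1) ^+ 2 * (q^-1 * q) by ring.
  by rewrite mulVr // mulrV // expr1n mulr1.
rewrite scale1r opprB /al /be !scaleNr.
by rewrite !addrA (ACl (1*4*2*3)).
Qed.

Lemma F0F' : F0 * F' = al *: UU + be *: DD + (F0 * F1 + F0 * F2).
Proof.
rewrite F'exp !mulrDr -!scalerAr !mulrA /UU /DD.
by rewrite !addrA (ACl (2*3*1*4)).
Qed.

Lemma F'F1 : F' * F1 = (1 + al * kp) *: F1 + ga *: (F2 * F1).
Proof.
rewrite F'exp !mulrDl -!scalerAl.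
case: Fid => _ h1 _; case: Ftl2 => h121 _ _.
rewrite h1 h121 -mulrA h1 scalerA /ga !scalerDl !scale1r.
by rewrite !addrA.
Qed.

Lemma F0F'F1 : F0 * F' * F1 = (1 + al * kp) *: (F0 * F1) + ga *: DD.
Proof.
by rewrite -mulrA F'F1 mulrDr -!scalerAr /DD [F0 * (F2 * F1)]mulrA.
Qed.

Local Notation ee := (e F0 F1 F2).
Local Notation WW := (W F0 F1 F2).
Local Notation FS := (Fs F0 F1 F2).

Lemma FSM n m x y : FS n x -> FS m y -> FS (n + m) (x * y).
Proof. exact: (FsM Fid Ftl1 Ftl2). Qed.

Lemma FSmono n n' x : (n <= n')%N -> FS n x -> FS n' x.
Proof. exact: Fs_mono. Qed.

Lemma FSexp a n x : FS a x -> FS (a * n) (x ^+ n).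
Proof. exact: (Fs_exp Fid Ftl1 Ftl2). Qed.

Lemma FS0 : FS 1 F0. Proof. exact: (Fse F0 F1 F2 0 0). Qed.
Lemma FS1 : FS 1 F1. Proof. exact: (Fse F0 F1 F2 0 1). Qed.
Lemma FS2 : FS 1 F2. Proof. exact: (Fse F0 F1 F2 0 2). Qed.

Lemma UUW : UU = WW 0 true 3.
Proof. by rewrite /UU; change (F0 * F1 * F2 = F0 * (F1 * (F2 * 1))); rewrite mulr1 mulrA. Qed.
Lemma DDW : DD = WW 0 false 3.
Proof. by rewrite /DD; change (F0 * F2 * F1 = F0 * (F2 * (F1 * 1))); rewrite mulr1 mulrA. Qed.

Lemma FSU : FS 3 UU. Proof. by rewrite UUW; apply: FsW. Qed.
Lemma FSD : FS 3 DD. Proof. by rewrite DDW; apply: FsW. Qed.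

Lemma FSUD : FS 4 (UU * DD).
Proof.
have -> : UU * DD = F0 * F1 * (F2 * F0 * F2) * F1 by rewrite /UU /DD !mulrA.
case: Ftl2 => _ -> _.
rewrite -scalerAr -!scalerAl; apply: FsZ.
exact: (FSM (FSM (FSM FS0 FS1) FS2) FS1).
Qed.

Lemma FSDU : FS 4 (DD * UU).
Proof.
have -> : DD * UU = F0 * F2 * (F1 * F0 * F1) * F2 by rewrite /UU /DD !mulrA.
case: Ftl1 => _ _ ->.
rewrite -scalerAr -!scalerAl; apply: FsZ.
exact: (FSM (FSM (FSM FS0 FS2) FS1) FS2).
Qed.

Lemma Papprox k : exists f, FS (3 * k + 2) f /\
  (F0 * F') ^+ k.+1 = al ^+ k.+1 *: UU ^+ k.+1 + be ^+ k.+1 *: DD ^+ k.+1 + f.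
Proof.
elim: k => [|k [f [hf he]]].
  exists (F0 * F1 + F0 * F2); split; last by rewrite !expr1 F0F'.
  exact: (FsD (FSM FS0 FS1) (FSM FS0 FS2)).
set L := al *: UU + be *: DD.
set f1 := F0 * F1 + F0 * F2.
set P' := al ^+ k.+1 *: UU ^+ k.+1 + be ^+ k.+1 *: DD ^+ k.+1.
exists ((al * be ^+ k.+1) *: (UU * DD ^+ k.+1) + (be * al ^+ k.+1) *: (DD * UU ^+ k.+1)
        + (L * f + f1 * (P' + f))).
split.
  have hL : FS 3 L by apply: FsD; apply: FsZ; [apply: FSU|apply: FSD].
  have hf1 : FS 2 f1 by exact: (FsD (FSM FS0 FS1) (FSM FS0 FS2)).
  have hP : FS (3 * k.+1) P'.
    by apply: FsD; apply: FsZ; apply: FSexp; [apply: FSU|apply: FSD].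
  apply: FsD; [apply: FsD|apply: FsD].
  - apply: FsZ; rewrite exprS mulrA.
    by apply: (FSmono _ (FSM FSUD (FSexp k FSD))); lia.
  - apply: FsZ; rewrite exprS mulrA.
    by apply: (FSmono _ (FSM FSDU (FSexp k FSU))); lia.
  - by apply: (FSmono _ (FSM hL hf)); lia.
  - apply: (FSmono _ (FSM hf1 (_ : FS (3 * k.+1) (P' + f)))); first lia.
    by apply: FsD => //; apply: (FSmono _ hf); lia.
have eLP : L * P' = al ^+ k.+2 *: UU ^+ k.+2 + be ^+ k.+2 *: DD ^+ k.+2 +
   ((al * be ^+ k.+1) *: (UU * DD ^+ k.+1) + (be * al ^+ k.+1) *: (DD * UU ^+ k.+1)).
  rewrite /L /P' !mulrDl !mulrDr -!scalerAl -!scalerAr !scalerA -!exprS.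
  by rewrite !addrA (ACl (1*4*2*3)).
rewrite exprS he F0F' -/L -/f1 -/P' mulrDl mulrDr eLP.
by rewrite !addrA.
Qed.

Lemma Mapprox k : exists f, FS (3 * k + 2) f /\
  (F0 * F') ^+ k * (F0 * F' * F1) = (ga * be ^+ k) *: DD ^+ k.+1 + f.
Proof.
case: k => [|k].
  exists ((1 + al * kp) *: (F0 * F1)); split.
    by apply: FsZ; exact: (FSM FS0 FS1).
  by rewrite expr0 mul1r F0F'F1 expr0 mulr1 expr1 addrC.
have [f [hf he]] := Papprox k.
set f2 := (1 + al * kp) *: (F0 * F1).
set P' := al ^+ k.+1 *: UU ^+ k.+1 + be ^+ k.+1 *: DD ^+ k.+1.
exists ((al ^+ k.+1 * ga) *: (UU ^+ k.+1 * DD) + (P' * f2 + f * (f2 + ga *: DD))).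
split.
  have hf2 : FS 2 f2 by apply: FsZ; exact: (FSM FS0 FS1).
  have hP : FS (3 * k.+1) P'.
    by apply: FsD; apply: FsZ; apply: FSexp; [apply: FSU|apply: FSD].
  apply: FsD; [|apply: FsD].
  - apply: FsZ; rewrite exprSr -mulrA.
    by apply: (FSmono _ (FSM (FSexp k FSU) FSUD)); lia.
  - by apply: (FSmono _ (FSM hP hf2)); lia.
  - apply: (FSmono _ (FSM hf (_ : FS 3 (f2 + ga *: DD)))); first lia.
    apply: FsD; last by apply: FsZ; apply: FSD.
    by apply: (FSmono _ hf2).
have ePD : P' * (ga *: DD) = (al ^+ k.+1 * ga) *: (UU ^+ k.+1 * DD) +
    (ga * be ^+ k.+1) *: DD ^+ k.+2.
  rewrite /P' mulrDl -!scalerAl -!scalerAr !scalerA -exprSr.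
  by rewrite [be ^+ k.+1 * ga]mulrC.
rewrite he F0F'F1 -/f2 -/P' mulrDl mulrDr ePD.
by rewrite !addrA (ACl (3*2*1*4)).
Qed.

Variable tau : A -> K.
Hypothesis htau : is_trace tau.

Lemma tauC x y : tau (x * y) = tau (y * x).
Proof. by case: htau. Qed.
Lemma tauL k x y : tau (k *: x + y) = k * tau x + tau y.
Proof. by case: htau. Qed.
Lemma tau0 : tau 0 = 0.
Proof.
have h := tauL 1 0 0; rewrite scale1r mul1r addr0 in h.
by apply: (addIr (tau 0)); rewrite add0r -h.
Qed.
Lemma tauD x y : tau (x + y) = tau x + tau y.
Proof. by have := tauL 1 x y; rewrite scale1r mul1r. Qed.
Lemma tauZ k x : tau (k *: x) = k * tau x.
Proof. by have := tauL k x 0; rewrite tau0 !addr0. Qed.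

Definition uu := g2 * g3 * g2inv.

Definition Rset (x : A) := exists c0 (ms : seq A), in_subalg2 g1 uu c0 /\
  (forall i, (i < size ms)%N -> markov_elt g1 uu g2 (nth 0 ms i)) /\
  tau x = tau (c0 + \sum_(m <- ms) m).

Lemma sub2_0 : in_subalg2 g1 uu 0.
Proof. by rewrite -(scale0r 1); apply: sub2_scale; apply: sub2_1. Qed.

Lemma RsetB b : in_subalg2 g1 uu b -> Rset b.
Proof. by move=> hb; exists b, [::]; split=> //; split=> //; rewrite big_nil addr0. Qed.

Lemma Rset_g2 b : in_subalg2 g1 uu b -> Rset (b * g2).
Proof.
move=> hb; exists 0, [:: b * g2]; split; first exact: sub2_0.
split; last by rewrite big_seq1 add0r.
case=> // _; exists b, 1, true; split=> //; first exact: sub2_1.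
by rewrite expr1 mulr1.
Qed.

Lemma RsetD x y : Rset x -> Rset y -> Rset (x + y).
Proof.
move=> [c0 [ms [h1 [h2 h3]]]] [c0' [ms' [h1' [h2' h3']]]].
exists (c0 + c0'), (ms ++ ms'); split; first exact: sub2_add.
split.
  move=> i; rewrite size_cat nth_cat => hi.
  case: ifP => hi2; first exact: h2.
  apply: h2'; move/negbT: hi2; rewrite -leqNgt => h; by rewrite -(ltn_add2l (size ms)) subnKC.
rewrite tauD h3 h3' big_cat /= !tauD.
by rewrite !addrA (ACl (1*3*2*4)).
Qed.

Lemma RsetZ k x : Rset x -> Rset (k *: x).
Proof.
move=> [c0 [ms [h1 [h2 h3]]]].
exists (k *: c0), (map (fun m => k *: m) ms); split; first exact: sub2_scale.
split.
  move=> i; rewrite size_map => hi.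
  rewrite (nth_map 0) //.
  have [a [a' [eps [ha ha' ->]]]] := h2 i hi.
  exists (k *: a), a', eps; split=> //; first exact: sub2_scale.
  by rewrite !scalerAl.
rewrite tauZ h3 big_map -tauZ scalerDr scaler_sumr.
by [].
Qed.

Lemma Rset_tau x y : tau x = tau y -> Rset y -> Rset x.
Proof. by move=> h [c0 [ms [h1 [h2 h3]]]]; exists c0, ms; rewrite h. Qed.

Lemma Rsolve a x y f : a \is a GRing.unit -> y = a *: x + f ->
  Rset y -> Rset f -> Rset x.
Proof.
move=> ha hy ry rf.
have -> : x = a^-1 *: y + (- a^-1) *: f.
  by rewrite hy scalerDr scalerA mulVr // scale1r scaleNr addrK.
by apply: RsetD; apply: RsetZ.
Qed.

Lemma BF0 : in_subalg2 g1 uu F0.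
Proof. by rewrite F0E; apply: sub2_scale; apply: sub2_add; [apply: sub2_a|apply: sub2_1]. Qed.

Lemma BF' : in_subalg2 g1 uu F'.
Proof. by rewrite F'B; apply: sub2_scale; apply: sub2_add; [apply: sub2_b|apply: sub2_1]. Qed.

Lemma BP k : in_subalg2 g1 uu ((F0 * F') ^+ k).
Proof.
elim: k => [|k IH]; first by rewrite expr0; apply: sub2_1.
by rewrite exprS; apply: sub2_mul => //; apply: sub2_mul; [apply: BF0|apply: BF'].
Qed.

Lemma RsetBF1 b : in_subalg2 g1 uu b -> Rset (b * F1).
Proof.
move=> hb; rewrite F1E -scalerAr mulrDr mulr1; apply: RsetZ; apply: RsetD.
  exact: Rset_g2.
exact: RsetB.
Qed.

Lemma Rsete i : Rset (ee i).
Proof.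
rewrite -e_mod; case: (res3 i) => [->|[->|->]].
- by apply: RsetB; apply: BF0.
- by rewrite -[ee 1]mul1r; apply: RsetBF1; apply: sub2_1.
- apply: (@Rset_tau _ F'); last by apply: RsetB; apply: BF'.
  by rewrite /F' tauC mulrA; case: hinv => _ ->; rewrite mul1r.
Qed.

Lemma FsR n x : (forall m i b, (m <= n)%N -> Rset (WW i b m)) -> FS n x -> Rset x.
Proof.
move=> h; elim=> [i b m hm| |y z _ hy _ hz|k y _ hy].
- exact: h.
- by rewrite -(scale0r 1); apply: RsetZ; apply: RsetB; apply: sub2_1.
- exact: RsetD.
- exact: RsetZ.
Qed.

Lemma unit_al : al \is a GRing.unit.
Proof. by rewrite /al unitrN. Qed.
Lemma unit_be : be \is a GRing.unit.
Proof. by rewrite /be /dd unitrN unitrM hq1 unitrV hq. Qed.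
Lemma unit_ga : ga \is a GRing.unit.
Proof.
have -> : ga = - q^-1.
  rewrite /ga /be /dd.
  have -> : - ((q + 1) * q^-1) + 1 = - q^-1 - (q * q^-1 - 1) by ring.
  by rewrite mulrV // subrr subr0.
by rewrite unitrN unitrV.
Qed.

Lemma RUD k : (forall x, FS (3 * k + 2) x -> Rset x) ->
  Rset (DD ^+ k.+1) /\ Rset (UU ^+ k.+1).
Proof.
move=> hR.
have hD : Rset (DD ^+ k.+1).
  have [f [hf he]] := Mapprox k.
  apply: (Rsolve _ he); first by rewrite unitrM unit_ga unitrX // unit_be.
    rewrite mulrA; apply: RsetBF1; apply: sub2_mul; first exact: BP.
    by apply: sub2_mul; [apply: BF0|apply: BF'].
  exact: hR.
split=> //.
have [f [hf he]] := Papprox k.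
rewrite -addrA in he.
apply: (Rsolve _ he); first by rewrite unitrX // unit_al.
  exact: RsetB (BP _).
by apply: RsetD; [apply: RsetZ|apply: hR].
Qed.

Lemma Rall k m i b : (m <= 3 * k + 2)%N -> Rset (WW i b m).
Proof.
elim: k m i b => [|k IH] m i b hm.
  case: m hm => [|[|[|m]]] // _.
  - by apply: RsetB; apply: sub2_1.
  - by rewrite /= mulr1; apply: Rsete.
  - apply: (@Rset_tau _ (kp *: WW i b 1)).
      by rewrite tauZ (T2b Fid Ftl1 Ftl2 tauC tauZ).
    by apply: RsetZ; rewrite /= mulr1; apply: Rsete.
have hR : forall x, FS (3 * k + 2) x -> Rset x.
  by move=> x; apply: FsR => m' i' b' hm'; apply: IH.
have [hD hU] := RUD hR.
have h3 : forall i b, Rset (WW i b (3 * k.+1)).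
  move=> i' b'; apply: (@Rset_tau _ (WW 0 b' (3 * k.+1))).
    exact: (Trot F0 F1 F2 tauC).
  by rewrite W_pow; case: b'; rewrite -?UUW -?DDW.
case: (leqP m (3 * k + 2)) => hm2; first exact: IH.
have : m = 3 * k.+1 \/ m = (3 * k.+1).+1 \/ m = (3 * k.+1).+2 by lia.
case=> [->|[->|->]].
- exact: h3.
- by apply: (@Rset_tau _ (WW i b (3 * k.+1))); [exact: (T1 Fid tauC)|].
- apply: (@Rset_tau _ (kp *: WW (i + step b) b (3 * k.+1))).
    by rewrite tauZ (T2 Ftl1 Ftl2 tauC tauZ).
  by apply: RsetZ.
Qed.

Lemma RsetFS n x : FS n x -> Rset x.
Proof. by apply: FsR => m i b hm; apply: (@Rall n); lia. Qed.

Definition FSx x := exists n, FS n x.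

Lemma FSxM x y : FSx x -> FSx y -> FSx (x * y).
Proof. by move=> [n hn] [m hm]; exists (n + m); apply: FSM. Qed.

Lemma FSxX x k : FSx x -> FSx (x ^+ k).
Proof.
move=> hx; elim: k => [|k IH]; first by exists 0%N; rewrite expr0; apply: Fs1.
by rewrite exprS; apply: FSxM.
Qed.

Lemma FSxg (g : A) F : F = cc *: (g + 1) -> FS 1 F -> FSx g.
Proof.
move=> hF hF1; exists 1%N; rewrite (gF g) -hF.
by apply: FsB; [apply: FsZ|apply: Fs1].
Qed.

Lemma RsetY r s : Rset ((g1 * uu) ^+ r * g1 * g2 * (g1 * uu) ^+ s * g1 * g2).
Proof.
have h1 : FSx g1 by apply: (FSxg F0E FS0).
have h2 : FSx g2 by apply: (FSxg F1E FS1).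
have h3 : FSx g3 by apply: (FSxg F2E FS2).
have hi : FSx g2inv.
  by exists 1%N; rewrite ginvF; apply: FsB; [apply: FsZ; apply: FS1|apply: Fs1].
have hu : FSx (g1 * uu) by rewrite /uu; apply: FSxM => //; apply: FSxM => //; apply: FSxM => //.
have [n hn] : FSx ((g1 * uu) ^+ r * g1 * g2 * (g1 * uu) ^+ s * g1 * g2).
  by apply: FSxM => //; apply: FSxM => //; apply: FSxM; [apply: FSxM => //; apply: FSxM => //|]; apply: FSxX.
exact: RsetFS hn.
Qed.

End Main.

Unset Implicit Arguments.
Theorem lemma4p7 (K : idomainType) (q : K)
    (hchar : [pchar K] =i pred0)
    (hq : q \is a GRing.unit) (hsq : exists t : K, q = t ^+ 2)
    (hq1 : q + 1 \is a GRing.unit)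
    (A : algType K) (g1 g2 g3 g2inv : A)
    (hrel : TL3hat_rels q g1 g2 g3)
    (hinv : g2 * g2inv = 1 /\ g2inv * g2 = 1)
    (tau : A -> K) (htau : is_trace tau)
    (r s : nat) (hr : (0 < r)%N) (hrs : (r <= s)%N) :
  let X := g2 * g1 * g3 in
  let u := g2 * g3 * g2inv in
  exists h : nat, (h <= s)%N /\
  exists c : nat -> A, (forall j, (j <= h)%N -> in_subalg2 g1 u (c j)) /\
  exists ms : seq A, (forall i, (i < size ms)%N -> markov_elt g1 u g2 (nth 0 ms i)) /\
    tau ((g1 * u) ^+ r * g1 * g2 * (g1 * u) ^+ s * g1 * g2)
    = tau (\sum_(j < h.+1) c j * X ^+ j + \sum_(m <- ms) m).
Proof.
move=> X u.
have [c0 [ms [hc [hm he]]]] := RsetY hq hq1 hrel hinv htau r s.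
exists 0%N; split=> //.
exists (fun _ => c0); split=> //.
exists ms; split=> //.
by rewrite he big_ord1 expr0 mulr1.
Qed.
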